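(* Let $R>0$ and let $\mathbf L\colon\mathbb R^n\times\mathbb R^m\to\mathbb R$ be an $R$-smooth convex-concave function with a saddle point $\mathbf z^\star$. Let $\alpha_0\in(0,\frac{3}{4R})$ and define $$\alpha_{k+1}=\alpha_k\left(1-\frac{1}{(k+1)(k+3)}\,\frac{\alpha_k^2R^2}{1-\alpha_k^2R^2}\right),\qquad k\ge0,$$ and $\alpha_\infty=\lim_{k\to\infty}\alpha_k$. Let $\mathbf z^0\in\mathbb R^n\times\mathbb R^m$ and define the EAG-V iterates $$\mathbf z^{k+1/2}=\mathbf z^k+\tfrac{1}{k+2}(\mathbf z^0-\mathbf z^k)-\alpha_k\mathbf G(\mathbf z^k),\qquad \mathbf z^{k+1}=\mathbf z^k+\tfrac{1}{k+2}(\mathbf z^0-\mathbf z^k)-\alpha_k\mathbf G(\mathbf z^{k+1/2}),\quad k\ge0.$$ Then for all $k\ge0$, $$\|\nabla\mathbf L(\mathbf z^k)\|^2\le\frac{4(1+\alpha_0\alpha_\infty R^2)}{\alpha_\infty^2}\,\frac{\|\mathbf z^0-\mathbf z^\star\|^2}{(k+1)(k+2)}.$$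
   Context: Write $\mathbf z=(\mathbf x,\mathbf y)$. $\mathbf L$ convex-concave: convex in $\mathbf x$ for fixed $\mathbf y$, concave in $\mathbf y$ for fixed $\mathbf x$. A saddle point $(\mathbf x^\star,\mathbf y^\star)$ satisfies $\mathbf L(\mathbf x^\star,\mathbf y)\le\mathbf L(\mathbf x^\star,\mathbf y^\star)\le\mathbf L(\mathbf x,\mathbf y^\star)$ for all $\mathbf x,\mathbf y$. $\mathbf G(\mathbf z)=(\nabla_{\mathbf x}\mathbf L(\mathbf x,\mathbf y),-\nabla_{\mathbf y}\mathbf L(\mathbf x,\mathbf y))$; $\mathbf L$ is $R$-smooth if it is differentiable and $\mathbf G$ is $R$-Lipschitz. $\|\nabla\mathbf L\|=\|\mathbf G\|$. *)

(* Defs.v *)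
From HB Require Import structures.
From mathcomp Require Import all_boot all_order all_algebra.
From mathcomp Require Import all_classical all_reals all_analysis.
Set Implicit Arguments. Unset Strict Implicit. Unset Printing Implicit Defensive.
Import Order.TTheory GRing.Theory Num.Theory.
Import numFieldNormedType.Exports.
Local Open Scope ring_scope.

Section Defs.
Variable R : realType.

Definition sqnormv (n : nat) (v : 'rV[R]_n) : R := \sum_(i < n) (v 0 i) ^+ 2.

Definition sqnormz (n m : nat) (z : 'rV[R]_n * 'rV[R]_m) : R :=
  sqnormv z.1 + sqnormv z.2.
Definition enormz (n m : nat) (z : 'rV[R]_n * 'rV[R]_m) : R := Num.sqrt (sqnormz z).

Definition grad (n : nat) (f : 'rV[R]_n -> R) (x : 'rV[R]_n) : 'rV[R]_n :=
  \row_(i < n) derive f x (delta_mx 0 i).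

Definition saddleG (n m : nat) (L : 'rV[R]_n * 'rV[R]_m -> R)
  (z : 'rV[R]_n * 'rV[R]_m) : 'rV[R]_n * 'rV[R]_m :=
  (grad (fun x => L (x, z.2)) z.1, - grad (fun y => L (z.1, y)) z.2).

Definition convex_in (n : nat) (f : 'rV[R]_n -> R) : Prop :=
  forall (a b : 'rV[R]_n) (t : R), 0 <= t -> t <= 1 ->
    f (t *: a + (1 - t) *: b) <= t * f a + (1 - t) * f b.

Definition convex_concave (n m : nat) (L : 'rV[R]_n * 'rV[R]_m -> R) : Prop :=
  (forall y, convex_in (fun x => L (x, y))) /\
  (forall x, convex_in (fun y => - L (x, y))).

Definition is_saddle_point (n m : nat) (L : 'rV[R]_n * 'rV[R]_m -> R)
  (zs : 'rV[R]_n * 'rV[R]_m) : Prop :=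
  forall x y, L (zs.1, y) <= L zs /\ L zs <= L (x, zs.2).

Definition smooth_cc (n m : nat) (Rs : R) (L : 'rV[R]_n * 'rV[R]_m -> R) : Prop :=
  (forall z, differentiable L z) /\
  (forall z w, enormz (saddleG L z - saddleG L w) <= Rs * enormz (z - w)).

Fixpoint alpha (Rs a0 : R) (k : nat) : R :=
  match k with
  | 0%N => a0
  | k'.+1 => let a := alpha Rs a0 k' in
      a * (1 - (((k'.+1)%:R * (k'.+3)%:R)^-1) *
                 (a ^+ 2 * Rs ^+ 2 / (1 - a ^+ 2 * Rs ^+ 2)))
  end.

Fixpoint eagv (n m : nat) (L : 'rV[R]_n * 'rV[R]_m -> R) (Rs a0 : R)
  (z0 : 'rV[R]_n * 'rV[R]_m) (k : nat) : 'rV[R]_n * 'rV[R]_m :=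
  match k with
  | 0%N => z0
  | k'.+1 =>
    let zk := eagv L Rs a0 z0 k' in
    let ak := alpha Rs a0 k' in
    let zh := zk + ((k'.+2)%:R^-1) *: (z0 - zk) - ak *: saddleG L zk in
    zk + ((k'.+2)%:R^-1) *: (z0 - zk) - ak *: saddleG L zh
  end.

End Defs.

(* Main.v *)
Require Import Defs.
From HB Require Import structures.
From mathcomp Require Import all_boot all_order all_algebra.
From mathcomp Require Import all_classical all_reals all_analysis.
From mathcomp Require Import lra zify ring.
Import Order.TTheory GRing.Theory Num.Theory.
Import numFieldNormedType.Exports.
Local Open Scope ring_scope.
Local Open Scope classical_set_scope.
Set Implicit Arguments. Unset Strict Implicit.

Lemma deriv_le (R : realType) (V : normedModType R) (f : V -> R) a v c :
  derivable f a v -> (forall t : R, 0 < t < 1 -> f (t *: v + a) - f a <= t * c) ->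
  derive f a v <= c.
Proof.
move=> df H.
have := cvg_dnbhs_at_right df => /cvgr_to_le; apply.
near=> h.
have h0 : 0 < h by near: h; exact: nbhs_right_gt.
have h1 : h < 1 by near: h; exact: nbhs_right_lt.
rewrite /= -[_ *: _]/(h^-1 * _) ler_pdivrMl //.
by apply: H; rewrite h0 h1.
Unshelve. all: by end_near. Qed.

Lemma deriv_ge (R : realType) (V : normedModType R) (f : V -> R) a v c :
  derivable f a v -> (forall t : R, 0 < t < 1 -> t * c <= f (t *: v + a) - f a) ->
  c <= derive f a v.
Proof.
move=> df H.
have := cvg_dnbhs_at_right df => /cvgr_to_ge; apply.
near=> h.
have h0 : 0 < h by near: h; exact: nbhs_right_gt.
have h1 : h < 1 by near: h; exact: nbhs_right_lt.
rewrite /= -[_ *: _]/(h^-1 * _) ler_pdivlMl //.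
by apply: H; rewrite h0 h1.
Unshelve. all: by end_near. Qed.

Definition dotv (R : realType) n (u w : 'rV[R]_n) := \sum_(i < n) u 0 i * w 0 i.

Lemma derive_grad (R : realType) n (f : 'rV[R]_n -> R) a v :
  differentiable f a -> derive f a v = dotv (grad f a) v.
Proof.
move=> df; rewrite /dotv /grad.
under eq_bigr => i _ do rewrite mxE deriveE //.
rewrite deriveE //.
rewrite [in LHS](row_sum_delta v) linear_sum /=.
by apply: eq_bigr => i _; rewrite linearZ /= mulrC.
Qed.

Lemma diff_part1 (R : realType) n m (L : 'rV[R]_n * 'rV[R]_m -> R) x y :
  differentiable L (x, y) -> differentiable (fun x => L (x, y)) x.
Proof.
move=> dL.
have -> : (fun x => L (x, y)) = L \o (fun x => (x, y)) by [].
apply: differentiable_comp => //.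
Qed.

Lemma diff_part2 (R : realType) n m (L : 'rV[R]_n * 'rV[R]_m -> R) x y :
  differentiable L (x, y) -> differentiable (fun y => L (x, y)) y.
Proof.
move=> dL.
have -> : (fun y => L (x, y)) = L \o (fun y => (x, y)) by [].
apply: differentiable_comp => //.
Qed.

Section Dot.
Variables (R : realType) (n : nat).
Implicit Types (u v w : 'rV[R]_n).
Lemma dotvC u v : dotv u v = dotv v u.
Proof. by apply: eq_bigr => i _; rewrite mulrC. Qed.
Lemma dotvDl u v w : dotv (u + v) w = dotv u w + dotv v w.
Proof. by rewrite /dotv -big_split; apply: eq_bigr => i _; rewrite mxE mulrDl. Qed.
Lemma dotvNl u w : dotv (- u) w = - dotv u w.
Proof. by rewrite /dotv -sumrN; apply: eq_bigr => i _; rewrite mxE mulNr. Qed.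
Lemma dotvZl (a : R) u w : dotv (a *: u) w = a * dotv u w.
Proof. by rewrite /dotv mulr_sumr; apply: eq_bigr => i _; rewrite mxE mulrA. Qed.
Lemma dotvDr u v w : dotv w (u + v) = dotv w u + dotv w v.
Proof. by rewrite !(dotvC w) dotvDl. Qed.
Lemma dotvNr u w : dotv w (- u) = - dotv w u.
Proof. by rewrite !(dotvC w) dotvNl. Qed.
Lemma dotvZr (a : R) u w : dotv w (a *: u) = a * dotv w u.
Proof. by rewrite !(dotvC w) dotvZl. Qed.
Lemma dotv_ge0 u : 0 <= dotv u u.
Proof. by apply: sumr_ge0 => i _; rewrite -expr2 sqr_ge0. Qed.
Lemma sqnormvE u : sqnormv u = dotv u u.
Proof. by apply: eq_bigr => i _; rewrite expr2. Qed.
End Dot.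

Lemma grad_convex (R : realType) n (f : 'rV[R]_n -> R) a b :
  convex_in f -> differentiable f a -> f a + dotv (grad f a) (b - a) <= f b.
Proof.
move=> cf df; rewrite -derive_grad // addrC -lerBrDr.
apply: deriv_le; first exact: diff_derivable.
move=> t /andP[t0 t1].
have := cf b a t (ltW t0) (ltW t1).
have -> : t *: b + (1 - t) *: a = t *: (b - a) + a.
  by rewrite scalerBl scale1r scalerBr [RHS]addrC addrCA.
move=> h; rewrite lerBlDr; apply: (le_trans h); lra.
Qed.

Lemma grad_concave (R : realType) n (f : 'rV[R]_n -> R) a b :
  convex_in (fun x => - f x) -> differentiable f a -> f b <= f a + dotv (grad f a) (b - a).
Proof.
move=> cf df; rewrite -derive_grad // addrC -lerBlDr.
apply: deriv_ge; first exact: diff_derivable.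
move=> t /andP[t0 t1].
have := cf b a t (ltW t0) (ltW t1).
have -> : t *: b + (1 - t) *: a = t *: (b - a) + a.
  by rewrite scalerBl scale1r scalerBr [RHS]addrC addrCA.
move=> h; rewrite lerBrDr; lra.
Qed.

Lemma grad_min (R : realType) n (f : 'rV[R]_n -> R) a :
  (forall b, f a <= f b) -> differentiable f a -> grad f a = 0.
Proof.
move=> hm df; apply/rowP => i; rewrite !mxE.
have h1 : forall v, 0 <= derive f a v.
  move=> v; apply: deriv_ge; first exact: diff_derivable.
  by move=> t _; rewrite mulr0 subr_ge0.
apply/eqP; rewrite eq_le h1 andbT.
have := h1 (- delta_mx 0 i); rewrite !deriveE // linearN /= oppr_ge0 //.
Qed.

Lemma grad_max (R : realType) n (f : 'rV[R]_n -> R) a :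
  (forall b, f b <= f a) -> differentiable f a -> grad f a = 0.
Proof.
move=> hm df; apply/rowP => i; rewrite !mxE.
have h1 : forall v, derive f a v <= 0.
  move=> v; apply: deriv_le; first exact: diff_derivable.
  by move=> t _; rewrite mulr0 subr_le0.
apply/eqP; rewrite eq_le h1 /=.
have := h1 (- delta_mx 0 i); rewrite !deriveE // linearN /= oppr_le0 //.
Qed.

Definition dotz (R : realType) n m (u w : 'rV[R]_n * 'rV[R]_m) :=
  dotv u.1 w.1 + dotv u.2 w.2.

Section Dotz.
Variables (R : realType) (n m : nat).
Implicit Types (u v w : 'rV[R]_n * 'rV[R]_m).
Lemma dotzC u v : dotz u v = dotz v u.
Proof. by rewrite /dotz dotvC [dotv u.2 _]dotvC. Qed.
Lemma dotzDl u v w : dotz (u + v) w = dotz u w + dotz v w.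
Proof. by rewrite /dotz /= !dotvDl addrACA. Qed.
Lemma dotzNl u w : dotz (- u) w = - dotz u w.
Proof. by rewrite /dotz /= !dotvNl opprD. Qed.
Lemma dotzZl (a : R) u w : dotz (a *: u) w = a * dotz u w.
Proof. by rewrite /dotz /= !dotvZl mulrDr. Qed.
Lemma dotzDr u v w : dotz w (u + v) = dotz w u + dotz w v.
Proof. by rewrite !(dotzC w) dotzDl. Qed.
Lemma dotzNr u w : dotz w (- u) = - dotz w u.
Proof. by rewrite !(dotzC w) dotzNl. Qed.
Lemma dotzZr (a : R) u w : dotz w (a *: u) = a * dotz w u.
Proof. by rewrite !(dotzC w) dotzZl. Qed.
Lemma dotz_ge0 u : 0 <= dotz u u.
Proof. by rewrite /dotz addr_ge0 // dotv_ge0. Qed.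
Lemma sqnormzE u : sqnormz u = dotz u u.
Proof. by rewrite /sqnormz /dotz !sqnormvE. Qed.
End Dotz.

Lemma saddle_mono (R : realType) n m (L : 'rV[R]_n * 'rV[R]_m -> R) z w :
  (forall z, differentiable L z) -> convex_concave L ->
  0 <= dotz (saddleG L z - saddleG L w) (z - w).
Proof.
move=> dL [cx cy]; case: z => x y; case: w => x' y'.
rewrite /dotz /saddleG /=.
set gxz := grad _ x; set gyz := grad _ y; set gxw := grad _ x'; set gyw := grad _ y'.
have i1 : L (x, y) + dotv gxz (x' - x) <= L (x', y).
  by apply: grad_convex => //; apply: diff_part1.
have i2 : L (x, y') <= L (x, y) + dotv gyz (y' - y).
  by apply: grad_concave => //; apply: diff_part2.
have i3 : L (x', y') + dotv gxw (x - x') <= L (x, y').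
  by apply: grad_convex => //; apply: diff_part1.
have i4 : L (x', y) <= L (x', y') + dotv gyw (y - y').
  by apply: grad_concave => //; apply: diff_part2.
move: i1 i2 i3 i4.
rewrite !(dotvDl, dotvDr, dotvNl, dotvNr) opprK.
lra.
Qed.

Lemma saddle_zero (R : realType) n m (L : 'rV[R]_n * 'rV[R]_m -> R) zs :
  (forall z, differentiable L z) -> is_saddle_point L zs -> saddleG L zs = 0.
Proof.
move=> dL hs; case: zs hs => xs ys hs.
rewrite /saddleG /= grad_min ?grad_max ?oppr0 //.
- by move=> b; case: (hs xs b).
- by apply: diff_part2.
- by move=> b; case: (hs b ys).
- by apply: diff_part1.
Qed.
Lemma qb (R : realType) (x N : R) : 0 <= x -> x < 3/4 -> 3 <= N ->
  [/\ 0 <= N^-1 * (x / (1 - x)), N^-1 * (x / (1 - x)) <= 3 / N &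
      N^-1 * (x / (1 - x)) < 1].
Proof.
move=> x0 x1 N3.
have N0 : 0 < N by lra.
have s0 : 0 <= x / (1 - x) by apply: divr_ge0; lra.
have s3 : x / (1 - x) < 3 by rewrite ltr_pdivrMr; lra.
split; first by apply: mulr_ge0 => //; rewrite invr_ge0 ltW.
  by rewrite [3 / N]mulrC ler_wpM2l // ?invr_ge0 ?ltW.
rewrite mulrC ltr_pdivrMr // mul1r; lra.
Qed.

Section Alpha.
Variables (R : realType) (Rs a0 : R).
Hypotheses (Rs0 : 0 < Rs) (a00 : 0 < a0) (a0R : a0 < 3 / (4 * Rs)).
Local Notation a := (alpha Rs a0).

Lemma a0Rs : a0 * Rs < 3/4.
Proof. by move: a0R; rewrite ltr_pdivlMr ?mulr_gt0 // => h; lra. Qed.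

Lemma alpha_bnd k : 0 < a k <= a0.
Proof.
elim: k => [|k /andP[h0 h1]]; first by rewrite a00 lexx.
rewrite /=.
set x := a k ^+ 2 * Rs ^+ 2.
have x0 : 0 <= x by rewrite /x mulr_ge0 // sqr_ge0.
have x1 : x < 3/4.
  have : a k * Rs <= a0 * Rs by rewrite ler_pM2r.
  have := a0Rs; rewrite /x -exprMn => h1' h2.
  have h3 : 0 < a k * Rs by rewrite mulr_gt0.
  nra.
have N3 : 3 <= (k.+1)%:R * (k.+3)%:R :> R.
  have : (3 <= k.+1 * k.+3)%N by nia.
  by rewrite -natrM ler_nat.
have [q0 q3 q1'] := qb x0 x1 N3.
have q1 : 3 / ((k.+1)%:R * (k.+3)%:R) <= 1 :> R by rewrite ler_pdivrMr; lra.
apply/andP; split.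
  apply: mulr_gt0 => //. rewrite subr_gt0. exact: q1'.
have : a k * (1 - ((k.+1)%:R * (k.+3)%:R)^-1 * (x / (1 - x))) <= a k.
  by rewrite ger_pMr // gerBl.
move=> h; apply: (le_trans h h1).
Qed.

Lemma alpha_q k : exists q, [/\ a k.+1 = a k * (1 - q), 0 <= q, q < 1 &
  q <= 3 / ((k.+1)%:R * (k.+3)%:R)].
Proof.
have /andP[h0 h1] := alpha_bnd k.
set x := a k ^+ 2 * Rs ^+ 2.
have x0 : 0 <= x by rewrite /x mulr_ge0 // sqr_ge0.
have x1 : x < 3/4.
  have : a k * Rs <= a0 * Rs by rewrite ler_pM2r.
  have := a0Rs; rewrite /x -exprMn => h1' h2.
  have h3 : 0 < a k * Rs by rewrite mulr_gt0.
  nra.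
have N3 : 3 <= (k.+1)%:R * (k.+3)%:R :> R.
  have : (3 <= k.+1 * k.+3)%N by nia.
  by rewrite -natrM ler_nat.
have [q0 q3 q1'] := qb x0 x1 N3.
by exists (((k.+1)%:R * (k.+3)%:R)^-1 * (x / (1 - x))).
Qed.

Lemma alpha_noninc k : a k.+1 <= a k.
Proof.
have [q [-> q0 q1 _]] := alpha_q k.
have /andP[h0 _] := alpha_bnd k.
by rewrite ger_pMr // gerBl.
Qed.

Lemma lb_step (j b c q : R) : 0 <= j -> 0 < b -> 0 < c ->
  (j + 4) * c <= 4 * (j + 1) * b -> 0 <= q -> q <= 3 / ((j + 2) * (j + 4)) ->
  (j + 5) * c <= 4 * (j + 2) * (b * (1 - q)).
Proof.
move=> j0 b0 c0 ih q0 q3.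
have hq : (j + 2) * (j + 4) * q <= 3.
  rewrite mulrC -ler_pdivlMr; [exact: q3 | apply: mulr_gt0; lra].
have hbq : 4 * b * ((j + 2) * (j + 4) * q) <= 4 * b * 3.
  by rewrite ler_pM2l // mulr_gt0 //; lra.
have j4 : 0 < j + 4 by lra.
rewrite -(ler_pM2l j4).
have : (j + 4) * ((j + 5) * c) <= (j + 5) * (4 * (j + 1) * b).
  by rewrite mulrCA ler_pM2l //; lra.
nra.
Qed.

Lemma alpha_lb k : (k.+4)%:R * a 1 <= 4 * (k.+1)%:R * a k.+1.
Proof.
elim: k => [|k ih]; first by rewrite mulr1 lexx.
have [q [-> q0 q1 q3]] := alpha_q k.+1.
have /andP[b0 _] := alpha_bnd k.+1.
have /andP[c0 _] := alpha_bnd 1.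
move: ih q3.
have E : forall i : nat, (i + k)%:R = k%:R + i%:R :> R.
  by move=> i; rewrite natrD addrC.
rewrite -[k.+4]/(4 + k)%N -[k.+1]/(1 + k)%N -[k.+1.+4]/(5 + k)%N.
rewrite -[k.+2]/(2 + k)%N !E => ih q3.
by apply: lb_step => //.
Qed.

Lemma alpha_lb' k : a 1 / 4 <= a k.
Proof.
have /andP[c0 _] := alpha_bnd 1.
case: k => [|k].
  have := alpha_noninc 0; lra.
have := alpha_lb k; have /andP[b0 _] := alpha_bnd k.+1.
have : (k.+1)%:R <= (k.+4)%:R :> R by rewrite ler_nat; lia.
have : 0 < (k.+1)%:R :> R by rewrite ltr0n.
move=> h1 h2 h3.
have : (k.+1)%:R * a 1 <= (k.+1)%:R * (4 * a k.+1).
  apply: le_trans _ (le_trans h3 _); first by rewrite ler_pM2r.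
  by rewrite [4 * _]mulrC -mulrA.
by rewrite ler_pM2l // => h; lra.
Qed.

Lemma alpha_cvg : cvgn a.
Proof.
apply: nonincreasing_is_cvgn.
  by apply/nonincreasing_seqP => k; apply: alpha_noninc.
exists 0 => _ [k _ <-]; have /andP[h _] := alpha_bnd k; exact: ltW.
Qed.

Lemma ainf_le k : limn a <= a k.
Proof.
apply: nonincreasing_cvgn_ge; last exact: alpha_cvg.
by apply/nonincreasing_seqP => j; apply: alpha_noninc.
Qed.

Lemma ainf_gt0 : 0 < limn a.
Proof.
have /andP[c0 _] := alpha_bnd 1.
apply: (@lt_le_trans _ _ (a 1 / 4)); first by rewrite divr_gt0.
apply: limr_ge; first exact: alpha_cvg.
by near=> k; apply: alpha_lb'.
Unshelve. all: by end_near. Qed.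
End Alpha.
Lemma step_alg (R : realType) (K al alp Rs aa ab bb bc cc gx gpx : R) :
  1 <= K -> 0 < al -> 0 < Rs -> al ^+ 2 * Rs ^+ 2 < 1 ->
  alp = al * (1 - (K * (K + 2))^-1 * (al ^+ 2 * Rs ^+ 2 / (1 - al ^+ 2 * Rs ^+ 2))) ->
  0 <= (K + 1)^-1 * gx - (K + 1)^-1 * gpx - al * bc + al * ab ->
  cc - 2 * bc + bb <= al ^+ 2 * Rs ^+ 2 * (aa - 2 * ab + bb) ->
  (forall t, 0 <= bb + 2 * t * bc + t ^+ 2 * cc) ->
  alp * ((K + 1) * (K + 2)) / 2 * cc + (K + 1) * ((1 - (K + 1)^-1) * gpx - al * bc)
  <= al * (K * (K + 1)) / 2 * aa + K * gx.
Proof.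
move=> K1 al0 Rs0 r1 ealp mono lip pos.
set r := al ^+ 2 * Rs ^+ 2 in r1 ealp lip.
have r0 : 0 < r by rewrite /r mulr_gt0 // exprn_gt0.
set p := K * (K + 1).
set lam := p / (2 * al * Rs ^+ 2).
set nu := lam * (1 - r).
set Mbb := lam * (r - 1).
set Mbc := lam - (K + 1) ^+ 2 * al / 2.
set t := Mbc / Mbb.
have p0 : 0 < p by rewrite /p mulr_gt0 //; lra.
have lam0 : 0 < lam by rewrite /lam divr_gt0 // !mulr_gt0 // exprn_gt0.
have nu0 : 0 <= nu by rewrite /nu mulr_ge0 //; lra.
have E : al * (K * (K + 1)) / 2 * aa + K * gx -
  (alp * ((K + 1) * (K + 2)) / 2 * cc + (K + 1) * ((1 - (K + 1)^-1) * gpx - al * bc))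
  = p * ((K + 1)^-1 * gx - (K + 1)^-1 * gpx - al * bc + al * ab)
    + lam * (r * (aa - 2 * ab + bb) - (cc - 2 * bc + bb))
    + nu * (bb + 2 * t * bc + t ^+ 2 * cc).
  rewrite ealp /t /Mbb /Mbc /nu /lam /p /r.
  field.
  have hr : (al * Rs) ^+ 2 < 1 by rewrite exprMn.
  repeat (apply/andP; split); apply/negP => /eqP H; lra.
rewrite -subr_ge0 E.
apply: addr_ge0; [apply: addr_ge0|]; apply: mulr_ge0 => //; try lra.
Qed.

Lemma final_alg (R : realType) (K ainf al a0 Rs g s w D2 : R) :
  1 <= K -> 0 < ainf -> ainf <= al -> 0 <= g -> 0 <= D2 -> 0 <= a0 ->
  al * (K * (K + 1)) / 2 * g + K * s <= a0 * Rs ^+ 2 * D2 ->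
  w <= s ->
  (forall c, 0 <= c ^+ 2 * g + 2 * c * K * w + K ^+ 2 * D2) ->
  g <= 4 * (1 + a0 * ainf * Rs ^+ 2) / ainf ^+ 2 * (D2 / (K * (K + 1))).
Proof.
move=> K1 ai0 aial g0 D0 a00 hV hws pos.
set M := a0 * Rs ^+ 2 * D2.
set c := ainf * (K * (K + 1)) / 2.
have p0 : 0 < K * (K + 1) by rewrite mulr_gt0 //; lra.
have c0 : 0 < c by rewrite /c divr_gt0 // mulr_gt0.
have h1 : c * g + K * w <= M.
  apply: le_trans hV.
  have : c * g <= al * (K * (K + 1)) / 2 * g.
    rewrite ler_wpM2r // ler_pM2r ?invr_gt0 // ?ler_pM2r //.
  have : K * w <= K * s by rewrite ler_pM2l //; lra.
  lra.
have h2 : c ^+ 2 * g <= 2 * c * M + K ^+ 2 * D2.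
  have := pos c.
  have : 2 * c * (c * g + K * w) <= 2 * c * M.
    by rewrite ler_pM2l // mulr_gt0.
  move=> h3 h4.
  have e1 : 2 * c * (c * g + K * w) = 2 * (c ^+ 2 * g) + 2 * c * K * w by ring.
  rewrite e1 in h3.
  lra.
set T := 4 * (1 + a0 * ainf * Rs ^+ 2) / ainf ^+ 2 * (D2 / (K * (K + 1))).
have eT : T * c ^+ 2 = 2 * c * M + K ^+ 2 * D2 + K * D2.
  rewrite /T /c /M; field.
  repeat (apply/andP; split); apply/negP => /eqP H; lra.
have : c ^+ 2 * g <= c ^+ 2 * T.
  rewrite [c ^+ 2 * T]mulrC eT; apply: le_trans h2 _.
  rewrite lerDl mulr_ge0 //; lra.
by rewrite ler_pM2l // exprn_gt0.
Qed.

Local Close Scope classical_set_scope.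
Definition Vf (R : realType) n m (L : 'rV[R]_n * 'rV[R]_m -> R) Rs a0 z0 j :=
  let K := (j.+1)%:R in let zj := eagv L Rs a0 z0 j in
  alpha Rs a0 j * (K * (K + 1)) / 2 * sqnormz (saddleG L zj) +
  K * dotz (saddleG L zj) (zj - z0).

Lemma aux_sub (V : zmodType) (u a b : V) : u + a - b - u = a - b.
Proof. by rewrite addrAC [u + a]addrC addrK. Qed.

Lemma aux_sub2 (V : zmodType) (u a b : V) : u - a - (u - b) = b - a.
Proof. by rewrite opprB [LHS]addrC addrA subrK. Qed.

Lemma Vstep (R : realType) n m (L : 'rV[R]_n * 'rV[R]_m -> R) Rs a0 z0 :
  0 < Rs -> 0 < a0 -> a0 < 3 / (4 * Rs) ->
  (forall z, differentiable L z) -> convex_concave L ->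
  (forall u w, sqnormz (saddleG L u - saddleG L w) <= Rs ^+ 2 * sqnormz (u - w)) ->
  forall j, Vf L Rs a0 z0 j.+1 <= Vf L Rs a0 z0 j.
Proof.
move=> Rs0 a00 a0R dL hcc lip j.
rewrite /Vf.
have e2 : (j.+2)%:R = (j.+1)%:R + 1 :> R by rewrite natr1.
have e3 : (j.+3)%:R = (j.+1)%:R + 2 :> R by rewrite -!natr1; lra.
set K := (j.+1)%:R.
set zj := eagv L Rs a0 z0 j.
set al := alpha Rs a0 j.
set G := saddleG L.
set zh := zj + (j.+2%:R)^-1 *: (z0 - zj) - al *: G zj.
have ez : eagv L Rs a0 z0 j.+1 = zj + (j.+2%:R)^-1 *: (z0 - zj) - al *: G zh by [].
rewrite ez e2 -/K.
have eb : (j.+2%:R)^-1 = (K + 1)^-1 :> R by rewrite e2.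
rewrite eb in zh ez *.
set b := (K + 1)^-1.
set z1 := zj + _ - _.
have K1 : 1 <= K by rewrite /K ler1n.
have /andP[al0 ala0] : 0 < al <= a0 by apply: alpha_bnd.
have r1 : al ^+ 2 * Rs ^+ 2 < 1.
  have := a0Rs Rs0 a0R => h.
  have : al * Rs <= a0 * Rs by rewrite ler_pM2r.
  have h3 : 0 < al * Rs by rewrite mulr_gt0.
  rewrite -exprMn; nra.
have ealp : alpha Rs a0 j.+1 = al * (1 - (K * (K + 2))^-1 *
    (al ^+ 2 * Rs ^+ 2 / (1 - al ^+ 2 * Rs ^+ 2))).
  by rewrite [LHS]/= e3.
have mono : 0 <= dotz (G z1 - G zj) (z1 - zj) by apply: saddle_mono.
have lip1 := lip z1 zh.
have pos : forall t, 0 <= dotz (G zh + t *: G z1) (G zh + t *: G z1).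
  by move=> t; apply: dotz_ge0.
rewrite /z1 aux_sub in mono.
rewrite /z1 /zh aux_sub2 in lip1.
rewrite !sqnormzE in lip1 *.
rewrite -/zh -/z1 in lip1 mono *.
rewrite -/G in lip1.
have e1 : z1 - z0 = zj + b *: (z0 - zj) - al *: G zh - z0 by [].
rewrite e1.
clearbody z1 zh G.
move: mono lip1 pos.
rewrite !(dotzDl, dotzDr, dotzNl, dotzNr, dotzZl, dotzZr).
rewrite [dotz (G z1) (G zh)]dotzC [dotz (G zh) (G zj)]dotzC.
rewrite /b; move=> mono lip1 pos.
have pos' : forall t, 0 <= dotz (G zh) (G zh) + 2 * t * dotz (G zh) (G z1) +
    t ^+ 2 * dotz (G z1) (G z1).
  move=> t; have := pos t.
  rewrite !(dotzDl, dotzDr, dotzZl, dotzZr) [dotz (G z1) (G zh)]dotzC; lra.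
have := @step_alg R K al (alpha Rs a0 j.+1) Rs (dotz (G zj) (G zj))
  (dotz (G zj) (G zh)) (dotz (G zh) (G zh)) (dotz (G zh) (G z1)) (dotz (G z1) (G z1))
  (dotz (G zj) zj - dotz (G zj) z0) (dotz (G z1) zj - dotz (G z1) z0)
  K1 al0 Rs0 r1 ealp ltac:(lra) ltac:(lra) pos'.
lra.
Qed.

Theorem theorem2 (R : realType) (n m : nat) (Rs : R)
  (L : 'rV[R]_n * 'rV[R]_m -> R) (zs z0 : 'rV[R]_n * 'rV[R]_m) (a0 : R) :
  0 < Rs ->
  smooth_cc Rs L ->
  convex_concave L ->
  is_saddle_point L zs ->
  0 < a0 -> a0 < 3 / (4 * Rs) ->
  let ainf := limn (alpha Rs a0) in
  forall k : nat,
    sqnormz (saddleG L (eagv L Rs a0 z0 k)) <=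
      4 * (1 + a0 * ainf * Rs ^+ 2) / ainf ^+ 2 *
      (sqnormz (z0 - zs) / ((k.+1)%:R * (k.+2)%:R)).
Proof.
move=> Rs0 [dL hlip] hcc hs a00 a0R ainf k.
have lip : forall u w, sqnormz (saddleG L u - saddleG L w) <= Rs ^+ 2 * sqnormz (u - w).
  move=> u w; have h := hlip u w; rewrite /enormz in h.
  have s1 := sqrtr_ge0 (sqnormz (saddleG L u - saddleG L w)).
  have g1 : 0 <= sqnormz (saddleG L u - saddleG L w) by rewrite sqnormzE dotz_ge0.
  have g2 : 0 <= sqnormz (u - w) by rewrite sqnormzE dotz_ge0.
  rewrite -(sqr_sqrtr g1) -(sqr_sqrtr g2) -exprMn.
  by rewrite ler_pXn2r // ?nnegrE // mulr_ge0 // ?sqrtr_ge0 // ltW.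
have Gzs : saddleG L zs = 0 by apply: saddle_zero.
have VK : Vf L Rs a0 z0 k <= Vf L Rs a0 z0 0.
  elim: k => [|k ih]; first exact: lexx.
  apply: le_trans ih; exact: Vstep.
have V0 : Vf L Rs a0 z0 0 <= a0 * Rs ^+ 2 * sqnormz (z0 - zs).
  rewrite /Vf /= subrr.
  have -> : dotz (saddleG L z0) 0 = 0.
    by rewrite -(scale0r (0 : 'rV[R]_n * 'rV[R]_m)) dotzZr mul0r.
  rewrite mulr0 addr0 mul1r.
  have -> : a0 * (1 + 1) / 2 = a0 :> R by field.
  rewrite -mulrA ler_pM2l //.
  by have := lip z0 zs; rewrite Gzs subr0.
set zk := eagv L Rs a0 z0 k.
set Gk := saddleG L zk.
have monozs : 0 <= dotz Gk (zk - zs).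
  by have := saddle_mono zk zs dL hcc; rewrite Gzs subr0.
have e2 : (k.+2)%:R = (k.+1)%:R + 1 :> R by rewrite natr1.
rewrite e2.
apply: (@final_alg R (k.+1)%:R ainf (alpha Rs a0 k) a0 Rs (sqnormz Gk)
  (dotz Gk (zk - z0)) (dotz Gk (zs - z0))).
- by rewrite ler1n.
- exact: ainf_gt0.
- exact: ainf_le.
- by rewrite sqnormzE dotz_ge0.
- by rewrite sqnormzE dotz_ge0.
- exact: ltW.
- exact: le_trans VK V0.
- move: monozs; rewrite !(dotzDr, dotzNr); lra.
- move=> c; have := dotz_ge0 (c *: Gk + (k.+1)%:R *: (zs - z0)).
  rewrite sqnormzE !(dotzDl, dotzDr, dotzNl, dotzNr, dotzZl, dotzZr).
  rewrite [dotz zs Gk]dotzC [dotz z0 Gk]dotzC [dotz z0 zs]dotzC.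
  rewrite sqnormzE !(dotzDl, dotzDr, dotzNl, dotzNr) [dotz z0 zs]dotzC; lra.
Qed.
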